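(* Let $G$ be a Feynman diagram and $A_G$ the support of $\mathcal{F}_{z,m}$ for generic $(z,m)\in\mathbb{R}^K\times\mathbb{R}^{\mathcal{E}}$. Then $\mathcal{K}_G\cap\operatorname{int}\mathcal{C}_{A_G}\neq\emptyset$ if and only if $\mathcal{K}_G$ contains a polynomial in which every monomial $x^a$, $a\in A_G$, has strictly positive coefficient.
   Context: $G$ is a connected graph with internal edges $1,\dots,n$ (variables $x_1,\dots,x_n$); $\mathcal{T}$ = spanning trees (as subsets of $[n]$), $\mathcal{W}$ = spanning 2-forests $\{T_1,T_2\}$; $\mathcal{U}(x)=\sum_{T\in\mathcal{T}}\prod_{e\notin T}x_e$. For a linear map $L:\mathbb{R}^K\to\mathbb{R}^{\mathcal{W}}$ and $\mathcal{E}\subseteq[n]$, $\mathcal{F}_{z,m}(x)=\sum_{\{T_1,T_2\}\in\mathcal{W}}L_{T_1,T_2}(z)\prod_{e\notin T_1\sqcup T_2}x_e+\big(\sum_{e\in\mathcal{E}}m_ex_e\big)\mathcal{U}(x)$. The kinematic space is $\mathcal{K}_G=\{\mathcal{F}_{z,m}:(z,m)\in\mathbb{R}^K\times\mathbb{R}^{\mathcal{E}}\}\subseteq\mathbb{R}[x]_{A_G}$, where $\mathbb{R}[x]_{A_G}$ is the space of polynomials with support in $A_G$. $\mathcal{C}_{A_G}=\{g\in\mathbb{R}[x]_{A_G}:g\ge0\text{ on }\mathbb{R}^n_{>0}\}$ and $\operatorname{int}$ is the interior in $\mathbb{R}[x]_{A_G}$. *)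

(* Defs.v *)
From HB Require Import structures.
From mathcomp Require Import all_boot all_order all_algebra.
From mathcomp Require Import reals.
From mathcomp Require Import mpoly.
Set Implicit Arguments. Unset Strict Implicit. Unset Printing Implicit Defensive.
Import Order.TTheory GRing.Theory Num.Theory.
Local Open Scope ring_scope.

(* A graph G with vertex set V (a finType) and internal edges 'I_n; edge e has
   endpoints ends e = (u, v) (multi-edges and self-loops allowed). *)
Section Graph.
Variables (V : finType) (n : nat) (ends : 'I_n -> V * V).

Definition adjF (F : {set 'I_n}) : rel V :=
  fun u v => [exists e in F, (ends e == (u, v)) || (ends e == (v, u))].

Definition componentsF (F : {set 'I_n}) : {set {set V}} :=
  [set [set y | connect (adjF F) x y] | x : V].

(* F is a spanning forest with exactly k trees: (V, F) has k connected
   components and is acyclic, i.e. #|F| = #|V| - k. *)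
Definition spanning_forest (k : nat) (F : {set 'I_n}) : bool :=
  (#|componentsF F| == k) && (#|F| + k == #|V|)%N.

Definition spanning_tree (T : {set 'I_n}) : bool := spanning_forest 1 T.
(* a spanning 2-forest {T1,T2} is identified with its edge set T1 ⊔ T2 *)
Definition spanning_2forest (F : {set 'I_n}) : bool := spanning_forest 2 F.

Definition graph_connected : bool := #|componentsF setT| == 1%N.
End Graph.

Section Polys.
Variables (R : realType) (V : finType) (n : nat) (ends : 'I_n -> V * V).

Definition cmono (S : {set 'I_n}) : {mpoly R[n]} :=
  \prod_(e < n | e \notin S) 'X_e.

Definition symanzikU : {mpoly R[n]} :=
  \sum_(T : {set 'I_n} | spanning_tree ends T) cmono T.

(* F_{z,m}; the linear map L : R^K -> R^W is given by its matrix
   L F k (only rows indexed by spanning 2-forests matter). *)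
Definition symanzikF (K : nat) (L : {set 'I_n} -> 'I_K -> R)
    (E : {set 'I_n}) (z : 'I_K -> R) (m : 'I_n -> R) : {mpoly R[n]} :=
  \sum_(F : {set 'I_n} | spanning_2forest ends F)
      (\sum_(k < K) L F k * z k) *: cmono F
  + (\sum_(e in E) m e *: 'X_e) * symanzikU.

(* A_G: support of F_{z,m} for generic (z,m) = union of supports *)
Definition AG (K : nat) (L : {set 'I_n} -> 'I_K -> R) (E : {set 'I_n})
    (a : 'X_{1..n}) : Prop :=
  exists (z : 'I_K -> R) (m : 'I_n -> R), a \in msupp (symanzikF L E z m).

Definition kinspace K L E (g : {mpoly R[n]}) : Prop :=
  exists z m, g = symanzikF (K := K) L E z m.

Definition supported_in (A : 'X_{1..n} -> Prop) (g : {mpoly R[n]}) : Prop :=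
  forall a, a \in msupp g -> A a.

Definition nonneg_cone (A : 'X_{1..n} -> Prop) (g : {mpoly R[n]}) : Prop :=
  supported_in A g /\ forall x : 'I_n -> R, (forall i, 0 < x i) -> 0 <= g.@[x].

(* interior of C_A in the finite-dimensional real space R[x]_A
   (coordinates = coefficients on A; the max-norm topology) *)
Definition interior_cone (A : 'X_{1..n} -> Prop) (g : {mpoly R[n]}) : Prop :=
  nonneg_cone A g /\
  exists eps : R, 0 < eps /\
    forall h : {mpoly R[n]}, supported_in A h ->
      (forall a, A a -> `|h@_a - g@_a| < eps) -> nonneg_cone A h.
End Polys.

(* Main.v *)
Require Import Defs.
From HB Require Import structures.
From mathcomp Require Import all_boot all_order all_algebra.
From mathcomp Require Import reals.
From mathcomp Require Import mpoly.
From mathcomp Require Import lra ring zify.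
Set Implicit Arguments. Unset Strict Implicit. Unset Printing Implicit Defensive.
Import Order.TTheory GRing.Theory Num.Theory.
Local Open Scope ring_scope.

Section S.
Variables (R : realType) (V : finType) (n : nat) (ends : 'I_n -> V * V).
Implicit Types (F T : {set 'I_n}).

Definition muF (S : {set 'I_n}) : 'X_{1..n} := [multinom (i \notin S : nat) | i < n].

Lemma cmonoE S : cmono R S = 'X_[muF S].
Proof.
rewrite mpolyXE_id /cmono big_mkcond /=; apply: eq_bigr => i _.
by rewrite mnmE; case: (i \notin S); rewrite ?expr1 ?expr0.
Qed.

Definition cF K (L : {set 'I_n} -> 'I_K -> R) z F := \sum_(k < K) L F k * z k.
Definition Pc K (L : {set 'I_n} -> 'I_K -> R) z (b : 'X_{1..n}) :=
  \sum_(F : {set 'I_n} | spanning_2forest ends F) cF L z F * (muF F == b)%:R.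
Definition Qn (e : 'I_n) (b : 'X_{1..n}) : nat :=
  \sum_(T : {set 'I_n} | spanning_tree ends T) (U_(e) + muF T == b)%MM.

Lemma coefF K (L : {set 'I_n} -> 'I_K -> R) E z m b :
  (symanzikF ends L E z m)@_b = Pc L z b + \sum_(e in E) m e * (Qn e b)%:R.
Proof.
rewrite /symanzikF mcoeffD raddf_sum /=; congr (_ + _).
  by apply: eq_bigr => F _; rewrite mcoeffZ cmonoE mcoeffX.
rewrite mulr_suml raddf_sum /=; apply: eq_bigr => e _.
rewrite -scalerAl mcoeffZ /symanzikU mulr_sumr raddf_sum /= natr_sum; congr (_ * _).
by apply: eq_bigr => T _; rewrite cmonoE -mpolyXD mcoeffX.
Qed.
Definition wd (w : 'I_n -> int) (c : 'X_{1..n}) : int := \sum_i w i * (c i)%:Z.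

Lemma prod_exprz (t : R) (f : 'I_n -> int) : t != 0 ->
  \prod_i t ^ (f i) = t ^ (\sum_i f i).
Proof.
move=> t0; elim/big_rec2: _ => [|i x y _ ->]; first by rewrite expr0z.
by rewrite exprzDr // unitfE.
Qed.

Lemma vertex (h : {mpoly R[n]}) (b : 'X_{1..n}) (w : 'I_n -> int) :
  h@_b < 0 -> (forall c, c \in msupp h -> c != b -> wd w c < wd w b) ->
  exists x : 'I_n -> R, (forall i, 0 < x i) /\ h.@[x] < 0.
Proof.
move=> hb hw.
set M := \sum_(c <- msupp h) `|h@_c|.
have M0 : 0 <= M by apply: sumr_ge0 => c _.
set t := M / (- h@_b) + 2.
have hb' : 0 < - h@_b by rewrite oppr_gt0.
have t1 : 1 < t.
  have := divr_ge0 M0 (ltW hb'); rewrite /t; lra.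
have t0 : 0 < t by apply: lt_trans t1.
have tn0 : t != 0 by rewrite gt_eqF.
exists (fun i => t ^ (w i)); split=> [i|]; first exact: exprz_gt0.
have Hm (c : 'X_{1..n}) : \prod_i (t ^ w i) ^+ c i = t ^ (wd w c).
  rewrite -prod_exprz //; apply: eq_bigr => i _.
  by rewrite -exprz_exp.
rewrite mevalE.
have bin : b \in msupp h by rewrite mcoeff_msupp lt_eqF.
rewrite (bigD1_seq b) //= ?msupp_uniq // Hm.
set k := wd w b.
have Hle : \sum_(c <- msupp h | c != b) h@_c * \prod_i (t ^ w i) ^+ c i
   <= M * t ^ (k - 1).
  rewrite /M mulr_suml (bigD1_seq b) //= ?msupp_uniq //.
  apply: le_trans (_ : \sum_(c <- msupp h | c != b) `|h@_c| * t ^ (k - 1) <= _).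
    rewrite big_seq_cond [X in _ <= X]big_seq_cond.
    apply: ler_sum => c /andP[cin cb]; rewrite Hm.
    apply: le_trans (ler_norm _) _; rewrite normrM (ger0_norm (exprz_ge0 _ (ltW t0))).
    apply: ler_wpM2l => //; apply: ler_weXz2l; first exact: ltW.
    by rewrite lerBrDr lezD1 hw.
  rewrite lerDr; apply: mulr_ge0 => //; exact: exprz_ge0 (ltW t0).
apply: le_lt_trans (lerD (lexx _) Hle) _.
have -> : t ^ k = t ^ (k - 1) * t.
  by rewrite -[t in RHS]expr1z -exprzDr ?unitfE // subrK.
rewrite mulrCA [M * _]mulrC -mulrDr pmulr_rlt0 ?exprz_gt0 //.
have E : h@_b * (M / - h@_b) = - M.
  by field; rewrite (lt_eqF hb).
rewrite /t mulrDr E; lra.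
Qed.

Lemma AG_cases K (L : {set 'I_n} -> 'I_K -> R) E c : AG ends L E c ->
  (exists F, spanning_2forest ends F /\ muF F = c) \/
  (exists e T, e \in E /\ spanning_tree ends T /\ (U_(e) + muF T)%MM = c).
Proof.
case=> z [m]; rewrite mcoeff_msupp coefF => H.
have [/existsP[F /andP[HF1 /eqP HF2]]|nF] := boolP [exists F, spanning_2forest ends F && (muF F == c)].
  by left; exists F; split=> //; apply/eqP.
have [|nT] := boolP [exists e, exists T, [&& e \in E, spanning_tree ends T & (U_(e) + muF T == c)%MM]].
  by move=> /existsP[e /existsP[T /and3P[h1 h2 /eqP h3]]]; right; exists e, T.
exfalso; move/eqP: H; apply.
rewrite /Pc big1 ?add0r; last first.
  move=> F HF; case: eqP => [h|]; last by rewrite mulr0.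
  by case/negP: nF; apply/existsP; exists F; rewrite HF h eqxx.
apply: big1 => e eE; rewrite /Qn big1 ?mulr0 // => T HT.
case: eqP => // h; case/negP: nT; apply/existsP; exists e; apply/existsP; exists T.
by rewrite eE HT h eqxx.
Qed.

Lemma form_le2 K (L : {set 'I_n} -> 'I_K -> R) E c i : AG ends L E c -> (c i <= 2)%N.
Proof.
case/AG_cases=> [[F [_ <-]]|[e [T [_ [_ <-]]]]]; rewrite ?mnmDE ?mnm1E ?mnmE.
  by case: (i \notin F).
by case: (e == i); case: (i \notin T).
Qed.

Lemma seq_min_pos (s : seq 'X_{1..n}) (f : 'X_{1..n} -> R) :
  (forall c, c \in s -> 0 < f c) -> exists eps, 0 < eps /\ forall c, c \in s -> eps <= f c.
Proof.
elim: s => [|x s IH] H; first by exists 1; split.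
have [eps [e0 He]] : exists eps, 0 < eps /\ forall c, c \in s -> eps <= f c.
  by apply: IH => c cs; apply: H; rewrite inE cs orbT.
exists (Num.min (f x) eps); split.
  by rewrite lt_min e0 andbT H // inE eqxx.
move=> c; rewrite inE => /orP[/eqP->|cs]; rewrite ge_min ?lexx //.
by rewrite He ?orbT.
Qed.
Definition Bset F := [set f | (f \notin F) && spanning_tree ends (f |: F)].
Definition wF F (i : 'I_n) : int := (i \in Bset F)%:Z - (2 * n + 1)%N%:Z * (i \in F)%:Z.

Lemma wdE F (c : 'X_{1..n}) :
  wd (wF F) c = (\sum_(i in Bset F) c i)%N%:Z - (2 * n + 1)%N%:Z * (\sum_(i in F) c i)%N%:Z.
Proof.
have Hs (A : {set 'I_n}) : \sum_i (i \in A)%:Z * (c i)%:Z = (\sum_(i in A) c i)%N%:Z.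
  rewrite -[RHS]natz natr_sum [RHS]big_mkcond /=; apply: eq_bigr => i _.
  by case: (i \in A); rewrite ?mul1r ?mul0r // natz.
rewrite /wd /wF -(Hs (Bset F)) -(Hs F) mulr_sumr -sumrB; apply: eq_bigr => i _.
by rewrite mulrBl mulrA.
Qed.

Lemma muF_add e F : e \notin F -> (U_(e) + muF (e |: F))%MM = muF F.
Proof.
move=> eF; apply/mnmP => i; rewrite mnmDE mnm1E !mnmE in_setU1.
by case: (eqVneq e i) => [<-|ne]; rewrite /= ?eqxx ?(negbTE eF) // eq_sym (negbTE ne).
Qed.

Lemma ar1 a b c : (a + 2 = c)%N -> (b + 1 = c)%N -> (a < b)%N.
Proof. lia. Qed.
Lemma ar2 a b c : (a + 2 = c)%N -> (b + 1 = c)%N -> (b <= 1 + a)%N.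
Proof. lia. Qed.

Lemma weight_lemma K (L : {set 'I_n} -> 'I_K -> R) (E : {set 'I_n}) F :
  spanning_2forest ends F -> (forall e, e \in E -> e \notin Bset F) ->
  forall c, AG ends L E c -> c != muF F -> wd (wF F) c < wd (wF F) (muF F).
Proof.
move=> HF hEB c Hc cb; rewrite !wdE.
have sFb : (\sum_(i in F) muF F i = 0)%N.
  by apply: big1 => i iF; rewrite mnmE iF.
have sBb : (\sum_(i in Bset F) muF F i = #|Bset F|)%N.
  rewrite -sum1_card; apply: eq_bigr => i; rewrite inE mnmE => /andP[-> _] //.
rewrite sFb sBb.
have cardF : (#|F| + 2 = #|V|)%N by case/andP: HF => _ /eqP.
have [sF0|sFp] := posnP (\sum_(i in F) c i); last first.
  have h1 : (\sum_(i in Bset F) c i <= 2 * n)%N.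
    apply: (@leq_trans (\sum_(i in Bset F) 2)); first by apply: leq_sum => i _; exact: form_le2 Hc.
    rewrite sum_nat_const mulnC leq_mul2l /=.
    by apply: leq_trans (max_card _) _; rewrite card_ord.
  nia.
rewrite sF0.
suff : (\sum_(i in Bset F) c i < #|Bset F|)%N by lia.
move/eqP: sF0; rewrite sum_nat_eq0 => /forall_inP sF0.
case/AG_cases: Hc cb sF0 => [[F' [HF' <-]]|[e [T [eE [HT <-]]]]] cb sF0.
  have sub : F \subset F'.
    by apply/subsetP => i iF; move: (sF0 i iF); rewrite mnmE; case: (i \in F').
  have cardF' : (#|F'| + 2 = #|V|)%N by case/andP: HF' => _ /eqP.
  have e' : #|F'| = #|F| by apply/eqP; rewrite -(eqn_add2r 2) cardF cardF'.
  have /eqP eFF : F == F' by rewrite eqEcard sub /= e'.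
  by rewrite eFF eqxx in cb.
have eF : e \notin F.
  apply/negP => eF; move: (sF0 e eF); rewrite mnmDE mnm1E mnmE eqxx; by [].
have sub : F \subset T.
  apply/subsetP => i iF; move: (sF0 i iF); rewrite mnmDE mnm1E mnmE.
  by case: (i \in T); rewrite ?addn0 ?addn1.
have cardT : (#|T| + 1 = #|V|)%N by case/andP: HT => _ /eqP.
have /properP [_ [f fT fF]] : F \proper T.
  by rewrite properEcard sub /=; exact: ar1 cardF cardT.
have eT : f |: F = T.
  apply/eqP; rewrite eqEcard cardsU1 fF /=; apply/andP; split; last exact: ar2 cardF cardT.
  by rewrite subUset sub sub1set fT.
have fB : f \in Bset F by rewrite inE fF eT HT.
have eB := hEB e eE.
rewrite (cardD1 f) fB (bigD1 f) //= mnmDE mnm1E mnmE fT.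
have -> : (e == f) = false by apply/negP => /eqP ef; rewrite ef fB in eB.
rewrite add0n ltnS -sum1_card.
rewrite [X in (_ <= X)%N](eq_bigl (fun i => (i \in Bset F) && (i != f))); last first.
  by move=> i; rewrite !inE andbC.
apply: leq_sum => i /andP[iB _]; rewrite mnmDE mnm1E mnmE.
have -> : (e == i) = false by apply/negP => /eqP ei; rewrite ei iB in eB.
by case: (i \in T).
Qed.
End S.

Theorem mainTheorem18 (R : realType) (V : finType) (n : nat)
    (ends : 'I_n -> V * V) (K : nat) (L : {set 'I_n} -> 'I_K -> R)
    (E : {set 'I_n}) :
  graph_connected ends ->
  (exists g, kinspace ends L E g /\ interior_cone (AG ends L E) g) <->
  (exists g, kinspace ends L E g /\
     forall a, AG ends L E a -> 0 < g@_a).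
Proof.
have nnlemma : forall (A : 'X_{1..n} -> Prop) (h : {mpoly R[n]}), supported_in A h ->
    (forall a, a \in msupp h -> 0 <= h@_a) -> nonneg_cone A h.
  move=> A h hs hh; split=> // x xpos; rewrite mevalE big_seq; apply: sumr_ge0 => a ain.
  apply: mulr_ge0; first exact: hh.
  by apply: prodr_ge0 => i _; apply: exprn_ge0; apply/ltW/xpos.
move=> _; split.
- case=> g [[z [m ->]] [[supp nn] [eps [eps0 Heps]]]].
  set t : R := 1 + \sum_(F | spanning_2forest ends F) `|cF L z F|.
  have t1 : 1 <= t by rewrite /t lerDl; apply: sumr_ge0.
  exists (symanzikF ends L E z (fun _ => t)); split; first by exists z, (fun _ => t).
  move=> b Hb; rewrite coefF.
  have PB : `|Pc ends L z b| <= t - 1.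
    rewrite /t addrAC subrr add0r /Pc; apply: le_trans (ler_norm_sum _ _ _) _.
    apply: ler_sum => F _; rewrite normrM.
    by case: (_ == _); rewrite ?normr1 ?normr0 ?mulr1 ?mulr0.
  have [S0|Sp] := posnP (\sum_(e in E) Qn ends e b).
  + have Q0 : forall e, e \in E -> Qn ends e b = 0%N.
      move/eqP: S0; rewrite sum_nat_eq0 => /forall_inP H e eE; apply/eqP; exact: H.
    rewrite big1 ?addr0; last by move=> e eE; rewrite Q0 // mulr0.
    have gb : (symanzikF ends L E z m)@_b = Pc ends L z b.
      by rewrite coefF big1 ?addr0 // => e eE; rewrite Q0 // mulr0.
    rewrite -gb ltNge; apply/negP => gle.
    case/AG_cases: (Hb) => [[F [HF bF]]|[e [T [eE [HT eT]]]]]; last first.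
      have : (0 < Qn ends e b)%N.
        by rewrite /Qn (bigD1 T) //= eT eqxx.
      by rewrite Q0.
    have hEB : forall e, e \in E -> e \notin Bset ends F.
      move=> e eE; apply/negP; rewrite inE => /andP[eF eT].
      have : (0 < Qn ends e b)%N.
        by rewrite /Qn (bigD1 (e |: F)) //= muF_add // bF eqxx.
      by rewrite Q0.
    set g0 := symanzikF ends L E z m in gle supp Heps gb *.
    set h := g0 - (eps / 2) *: 'X_[b].
    have hb : h@_b < 0.
      rewrite /h mcoeffB mcoeffZ mcoeffX eqxx mulr1.
      have : 0 < eps / 2 by rewrite divr_gt0.
      move: gle; lra.
    have hsupp : forall c, c \in msupp h -> AG ends L E c.
      move=> c /msuppB_le; rewrite mem_cat => /orP[/supp //|/msuppZ_le].
      by rewrite msuppX inE => /eqP->.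
    have [_ hnn] : nonneg_cone (AG ends L E) h.
      apply: Heps => [c /hsupp //| a Ha].
      rewrite /h mcoeffB mcoeffZ mcoeffX addrC addKr normrN normrM.
      have e2 : 0 < eps / 2 by rewrite divr_gt0.
      rewrite (gtr0_norm e2).
      case: (_ == _); rewrite ?normr1 ?normr0 ?mulr1 ?mulr0 //; lra.
    have hw : forall c, c \in msupp h -> c != b -> wd (wF ends F) c < wd (wF ends F) b.
      move=> c cin cb; rewrite -bF; apply: (weight_lemma HF hEB (hsupp c cin)).
      by rewrite bF.
    have [x [xpos hx]] := vertex hb hw.
    by have := hnn x xpos; rewrite leNgt hx.
  + rewrite -mulr_sumr -natr_sum.
    have S1 : 1 <= (\sum_(e in E) Qn ends e b)%:R :> R by rewrite ler1n.
    have tS : t <= t * (\sum_(e in E) Qn ends e b)%:R.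
      by rewrite ler_peMr // (le_trans ler01 t1).
    move: PB; rewrite ler_norml => /andP[P1 _].
    lra.
- case=> g [[z [m ->]] Hpos].
  set g1 := symanzikF ends L E z m in Hpos *.
  have supp : supported_in (AG ends L E) g1 by move=> a ain; exists z, m.
  have [eps [eps0 Heps]] := @seq_min_pos R n (msupp g1) (fun a => g1@_a)
      (fun c cin => Hpos c (supp c cin)).
  exists g1; split; first by exists z, m.
  split.
    by apply: nnlemma => // a ain; apply/ltW/Hpos/supp.
  exists eps; split => // h hs hcl; apply: nnlemma => // a ain.
  have Aa := hs a ain.
  have gin : a \in msupp g1 by rewrite mcoeff_msupp gt_eqF // Hpos.
  have := Heps a gin; move: (hcl a Aa); rewrite ltr_norml => /andP[h1 _].
  lra.
Qed.
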